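(* Let $X$ be a locally path connected and semilocally simply connected space. Then the CO' topology on $\Pi_1(X)$ is coarser than the UC topology, i.e. every CO'-open subset of $\Pi_1(X)$ is UC-open. More precisely, for every CO'-open set $M\subseteq\Pi_1(X)$ and every $[\alpha]\in M$ there are open neighbourhoods $V^1$ of $\alpha(1)$ and $V^0$ of $\alpha(0)$ in $X$ with $N([\alpha],V^1,V^0)\subseteq M$.
   Context: For a space $X$, $\mathcal P X=C([0,1],X)$ is the set of paths, with the compact-open topology. For paths $\gamma,\eta$ with $\gamma(0)=\eta(1)$, $\gamma\,\Box\,\eta$ denotes the concatenated path which first traverses $\eta$ and then $\gamma$; $[\gamma]$ denotes the endpoint-fixing path-homotopy class of $\gamma$, and $\Pi_1(X)$ is the set of all such classes. A subset $V\subseteq X$ is relatively inessential if for $x\in V$ the homomorphism $\pi_1(V,x)\to\pi_1(X,x)$ induced by inclusion is trivial; $X$ is semilocally simply connected if every point has a relatively inessential neighbourhood. The CO' topology on $\Pi_1(X)$ is the quotient topology induced from $\mathcal P X$ by $q\colon\gamma\mapsto[\gamma]$. For $[\gamma]\in\Pi_1(X)$ and open sets $U\ni\gamma(1)$, $V\ni\gamma(0)$, let $N([\gamma],U,V)=\{[\delta\,\Box\,\gamma\,\Box\,\theta] : \delta\text{ a path in }U\text{ with }\delta(0)=\gamma(1),\ \theta\text{ a path in }V\text{ with }\theta(1)=\gamma(0)\}$. The UC topology is the topology generated by the sets $N([\gamma],U,V)$ with $U,V$ path connected relatively inessential open neighbourhoods of $\gamma(1)$, $\gamma(0)$. *)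

(* Defs.v *)
From HB Require Import structures.
From mathcomp Require Import all_boot all_order all_algebra.
From mathcomp Require Import all_classical all_reals all_analysis.
Set Implicit Arguments. Unset Strict Implicit. Unset Printing Implicit Defensive.
Import Order.TTheory GRing.Theory Num.Theory numFieldNormedType.Exports.
Local Open Scope classical_set_scope.
Local Open Scope ring_scope.

Section fundamental_groupoid.
Variables (R : realType) (X : topologicalType).

Definition unitI : set R := `[0, 1]%classic.

(* a path is a map R -> X that is continuous on [0,1] (only its values on
   [0,1] matter; maps agreeing on [0,1] are path-homotopic, hence give the
   same class and the quotient topology is unaffected) *)
Definition is_path (f : R -> X) : Prop := {within unitI, continuous f}.

Definition path_in (U : set X) (f : R -> X) : Prop :=
  is_path f /\ f @` unitI `<=` U.

(* g [] e : first traverse e, then g *)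
Definition pconcat (g e : R -> X) : R -> X :=
  fun s => if s <= 2^-1 then e (2 * s) else g (2 * s - 1).

Definition phomotopic (f g : R -> X) : Prop :=
  exists H : R * R -> X,
    [/\ {within unitI `*` unitI, continuous H},
        (forall s, unitI s -> H (s, 0) = f s),
        (forall s, unitI s -> H (s, 1) = g s),
        (forall t, unitI t -> H (0, t) = f 0) &
        (forall t, unitI t -> H (1, t) = f 1)].

Definition phclass (f : R -> X) : set (R -> X) :=
  [set g | is_path g /\ phomotopic f g].

Definition Pi1 : set (set (R -> X)) := [set phclass f | f in is_path].

(* open sets of the compact-open topology on the path space, via the
   subbasis { g | g(K) c= O }, K c= [0,1] compact, O open *)
Definition CO_open (S : set (R -> X)) : Prop :=
  S `<=` is_path /\
  forall g, S g -> exists (n : nat) (K : nat -> set R) (O : nat -> set X),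
    (forall i, (i < n)%N ->
        [/\ K i `<=` unitI, compact (K i), open (O i) & g @` K i `<=` O i]) /\
    (forall h, is_path h -> (forall i, (i < n)%N -> h @` K i `<=` O i) -> S h).

(* CO' topology: quotient topology induced by q : f |-> [f] *)
Definition COq_open (M : set (set (R -> X))) : Prop :=
  M `<=` Pi1 /\ CO_open [set f | is_path f /\ M (phclass f)].

Definition Nbd (g : R -> X) (U V : set X) : set (set (R -> X)) :=
  [set phclass (pconcat (pconcat d g) t) | d in
     [set d | path_in U d /\ d 0 = g 1] & t in
     [set t | path_in V t /\ t 1 = g 0]].

Definition path_connected (W : set X) : Prop :=
  forall a b, W a -> W b -> exists f, [/\ path_in W f, f 0 = a & f 1 = b].

Definition locally_path_connected : Prop :=
  forall (x : X) (U : set X), open U -> U x ->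
    exists W, [/\ open W, W x, W `<=` U & path_connected W].

Definition cst_path (x : X) : R -> X := fun _ => x.

(* pi_1(V,x) -> pi_1(X,x) trivial for every x in V *)
Definition rel_inessential (V : set X) : Prop :=
  forall x, V x -> forall f, path_in V f -> f 0 = x -> f 1 = x ->
    phomotopic f (cst_path x).

Definition semilocally_simply_connected : Prop :=
  forall x : X, exists V, nbhs x V /\ rel_inessential V.

End fundamental_groupoid.

(* Main.v *)
Require Import Defs.
From HB Require Import structures.
From mathcomp Require Import all_boot all_order all_algebra.
From mathcomp Require Import all_classical all_reals all_analysis.
Import Order.TTheory GRing.Theory Num.Theory numFieldNormedType.Exports.
Local Open Scope classical_set_scope.
Local Open Scope ring_scope.
From mathcomp Require Import ring lra.

Lemma comp_within {T U V : topologicalType} (A : set T) (B : set U) (m : T -> U) (H : U -> V) :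
  {within A, continuous m} -> (forall x, A x -> B (m x)) ->
  {within B, continuous H} -> {within A, continuous (H \o m)}.
Proof.
move=> /subspace_continuousP cm AB /subspace_continuousP cH.
apply/subspace_continuousP => x Ax W /= WH.
have := cH (m x) (AB x Ax) W WH.
move=> HH.
have := cm x Ax _ HH.
rewrite /from_subspace !nbhs_simpl /= /within /=.
apply: filterS => y /= P Ay; exact: P Ay (AB y Ay).
Qed.

Section aux.
Variable (R : realType).

Lemma cfst : continuous (fun p : R * R => p.1).
Proof. move=> [a b]; exact: cvg_fst. Qed.
Lemma csnd : continuous (fun p : R * R => p.2).
Proof. move=> [a b]; exact: cvg_snd. Qed.
Lemma cM {T : topologicalType} (f g : T -> R) : continuous f -> continuous g ->
  continuous (fun x => f x * g x).
Proof. by move=> hf hg x; exact: (@continuousM R _ f g x (hf x) (hg x)). Qed.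
Lemma cD {T : topologicalType} (f g : T -> R) : continuous f -> continuous g ->
  continuous (fun x => f x + g x).
Proof. by move=> hf hg x; exact: (@continuousD _ R^o _ f g x (hf x) (hg x)). Qed.
Lemma cB {T : topologicalType} (f g : T -> R) : continuous f -> continuous g ->
  continuous (fun x => f x - g x).
Proof. by move=> hf hg x; exact: (@continuousB _ R^o _ f g x (hf x) (hg x)). Qed.
Lemma cC {T : topologicalType} (c : R) : continuous (fun _ : T => c).
Proof. exact: cst_continuous. Qed.
Lemma cI : continuous (fun x : R => x).
Proof. by move=> x. Qed.
Lemma cP {T : topologicalType} (f g : T -> R) : continuous f -> continuous g ->
  continuous (fun x => (f x, g x)).
Proof. by move=> hf hg x; exact: (cvg_pair (hf x) (hg x)). Qed.
End aux.

Section paths.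
Variables (R : realType) (X : topologicalType).
Implicit Types f g e k : R -> X.

Lemma inI (a b x : R) : `[a, b]%classic x <-> a <= x /\ x <= b.
Proof. by rewrite /= in_itv /=; split => [/andP//|[-> ->]]. Qed.

Lemma pconcat_path g e : is_path g -> is_path e -> e 1 = g 0 -> is_path (pconcat g e).
Proof.
move=> pg pe ge; rewrite /is_path.
have -> : @unitI R = `[0, 2^-1]%classic `|` `[2^-1, 1]%classic.
  apply/seteqP; split => s; rewrite /unitI /=.
    move=> /inI [s0 s1]; have [h|h] := leP s (2^-1).
      by left; apply/inI; lra.
    by right; apply/inI; lra.
  by case=> /inI [s0 s1]; apply/inI; lra.
apply: withinU_continuous; [exact: itv_closed| exact: itv_closed | |].
- apply: (@subspace_eq_continuous _ _ _ (e \o (fun s => 2 * s))).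
    move=> s; rewrite inE => /inI [s0 s1]; rewrite /= /pconcat /from_subspace; case: ifP => // /negP []; exact: s1.
  apply: (@comp_within _ _ _ _ (@unitI R)); last exact: pe.
    by apply: continuous_subspaceT; apply: cM; [apply: cC|apply: cI].
  by move=> s /inI [s0 s1]; rewrite /unitI; apply/inI; lra.
- apply: (@subspace_eq_continuous _ _ _ (g \o (fun s => 2 * s - 1))).
    move=> s; rewrite inE => /inI [s0 s1]; rewrite /= /pconcat /from_subspace.
    case: ifP => // h.
    have -> : s = 2^-1 by apply/eqP; rewrite eq_le h s0.
    have -> : 2 * 2^-1 = 1 :> R by rewrite mulfV.
    by rewrite ge subrr.
  apply: (@comp_within _ _ _ _ (@unitI R)); last exact: pg.
    by apply: continuous_subspaceT; apply: cB; [apply: cM; [apply: cC|apply: cI]|apply: cC].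
  by move=> s /inI [s0 s1]; rewrite /unitI; apply/inI; lra.
Qed.

Lemma phom_trans f g k : phomotopic f g -> phomotopic g k -> phomotopic f k.
Proof.
move=> [H1 [c1 a1 b1 l1 r1]] [H2 [c2 a2 b2 l2 r2]].
have g0 : g 0 = f 0 by rewrite -b1 ?l1 //; apply/inI; lra.
have g1 : g 1 = f 1 by rewrite -b1 ?r1 //; apply/inI; lra.
exists (fun p => if p.2 <= 2^-1 then H1 (p.1, 2 * p.2) else H2 (p.1, 2 * p.2 - 1)); split.
- pose A : set (R * R) := (fst @^-1` (@unitI R)) `&` (snd @^-1` `[0, 2^-1]%classic).
  pose B : set (R * R) := (fst @^-1` (@unitI R)) `&` (snd @^-1` `[2^-1, 1]%classic).
  have -> : @unitI R `*` @unitI R = A `|` B.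
    apply/seteqP; split => -[s u]; rewrite /A /B /unitI /=.
      move=> [/inI s0 /inI [u0 u1]]; have [h|h] := leP u (2^-1).
        by left; split => //; apply/inI; lra.
      by right; split => //; apply/inI; lra.
    by case=> -[s0 /inI [u0 u1]]; split => //; apply/inI; lra.
  have clA : forall a b : R, closed ((fst @^-1` (@unitI R)) `&` (snd @^-1` `[a, b]%classic) : set (R * R)).
    move=> a b; apply: closedI.
      by apply: (proj1 (continuous_closedP _) (@cfst R)); exact: itv_closed.
    by apply: (proj1 (continuous_closedP _) (@csnd R)); exact: itv_closed.
  apply: withinU_continuous; [exact: clA| exact: clA | |].
  + apply: (@subspace_eq_continuous _ _ _ (H1 \o (fun p => (p.1, 2 * p.2)))).
      case=> s u; rewrite inE => -[_ /inI [u0 u1]]; rewrite /= /from_subspace /=; case: ifP => // /negP []; exact: u1.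
    apply: (@comp_within _ _ _ _ (@unitI R `*` @unitI R)); last exact: c1.
      apply: continuous_subspaceT; apply: cP; first exact: cfst.
      by apply: cM; [apply: cC|apply: csnd].
    case=> s u [s0 /inI [u0 u1]]; split => //=; apply/inI; rewrite /= in u0 u1; lra.
  + apply: (@subspace_eq_continuous _ _ _ (H2 \o (fun p => (p.1, 2 * p.2 - 1)))).
      case=> s u; rewrite inE => -[s01 /inI [u0 u1]]; rewrite /= /from_subspace /=.
      case: ifP => // h.
      have -> : u = 2^-1 by apply/eqP; rewrite eq_le h u0.
      have -> : 2 * 2^-1 = 1 :> R by rewrite mulfV.
      by rewrite subrr a2 // -b1.
    apply: (@comp_within _ _ _ _ (@unitI R `*` @unitI R)); last exact: c2.
      apply: continuous_subspaceT; apply: cP; first exact: cfst.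
      by apply: cB; [apply: cM; [apply: cC|apply: csnd]|apply: cC].
    by case=> s u [s0 /inI [u0 u1]]; split => //=; apply/inI; rewrite /= in u0 u1; lra.
- move=> s s01 /=; have -> : (0:R) <= 2^-1 by lra.
  by rewrite mulr0 a1.
- move=> s s01 /=; have -> : ((1:R) <= 2^-1) = false by apply/negbTE; rewrite -ltNge; lra.
  by rewrite mulr1 (_ : 2 - 1 = 1 :> R) ?b2 //; lra.
- move=> t /inI [t0 t1] /=; case: ifP => h.
    by rewrite l1 //; apply/inI; lra.
  rewrite l2 // ; apply/inI; move/negbT: h; rewrite -ltNge => h; lra.
- move=> t /inI [t0 t1] /=; case: ifP => h.
    by rewrite r1 //; apply/inI; lra.
  rewrite r2 // ; apply/inI; move/negbT: h; rewrite -ltNge => h; lra.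
Qed.

Lemma reparam_hom (gam : R -> X) (r1 r2 : R -> R) : is_path gam ->
  continuous r1 -> continuous r2 ->
  (forall s, @unitI R s -> @unitI R (r1 s)) -> (forall s, @unitI R s -> @unitI R (r2 s)) ->
  r1 0 = r2 0 -> r1 1 = r2 1 -> phomotopic (gam \o r1) (gam \o r2).
Proof.
move=> pg c1 c2 u1 u2 e0 e1.
exists (gam \o (fun p : R * R => (1 - p.2) * r1 p.1 + p.2 * r2 p.1)); split.
- apply: (@comp_within _ _ _ _ (@unitI R)); last exact: pg.
    apply: continuous_subspaceT; apply: cD; apply: cM.
    + by apply: cB; [apply: cC|apply: csnd].
    + by move=> p; apply: continuous_comp; [apply: cfst|apply: c1].
    + exact: csnd.
    + by move=> p; apply: continuous_comp; [apply: cfst|apply: c2].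
  case=> s u [/= s01 u01]; have /inI [a0 a1] := u1 _ s01; have /inI [b0 b1] := u2 _ s01.
  move/inI: u01 => [u0 u1'] ; apply/inI; split; nra.
- by move=> s _ /=; rewrite subr0 mul1r mul0r addr0.
- by move=> s _ /=; rewrite subrr mul0r add0r mul1r.
- by move=> t _ /=; rewrite -e0 -mulrDl subrK mul1r.
- by move=> t _ /=; rewrite -e1 -mulrDl subrK mul1r.
Qed.

End paths.

Section phi.
Variables (R : realType) (eps : R).
Hypothesis (e0 : 0 < eps) (e4 : 4 * eps <= 1).

Definition phi (s : R) : R :=
  ((2 + eps) / 4) * (Order.min s eps / eps) +
  (Order.min (Order.max s eps) (1 - eps) - eps) / 4 +
  ((1 + eps) / 4) * ((Order.max s (1 - eps) - (1 - eps)) / eps).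

Lemma phi_cont : continuous phi.
Proof.
have E0 := e0; have E4 := e4.
rewrite /phi; apply: cD; [apply: cD|].
- apply: cM; first exact: cC.
  apply: cM; last exact: cC.
  by apply: min_fun_continuous; [exact: cI|exact: cC].
- apply: cM; last exact: cC.
  apply: cB; last exact: cC.
  apply: min_fun_continuous; last exact: cC.
  by apply: max_fun_continuous; [exact: cI|exact: cC].
- apply: cM; first exact: cC.
  apply: cM; last exact: cC.
  apply: cB; last exact: cC.
  by apply: max_fun_continuous; [exact: cI|exact: cC].
Qed.

Lemma divI (x : R) : 0 <= x <= eps -> 0 <= x / eps <= 1.
Proof.
have E0 := e0; have E4 := e4.
move=> /andP[x0 x1]; apply/andP; split; first by rewrite divr_ge0 // ltW.
by rewrite ler_pdivrMr // mul1r.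
Qed.

Lemma phi_low s : 0 <= s <= eps -> 0 <= phi s <= (2 + eps) / 4.
Proof.
have E0 := e0; have E4 := e4.
move=> /andP[s0 s1]; rewrite /phi min_l // max_r // min_l; last lra.
rewrite max_r; last lra.
rewrite subrr !mul0r ?mulr0 !addr0.
have /andP[q0 q1] := divI (s) (ltac:(apply/andP; split => //)).
apply/andP; split; nra.
Qed.

Lemma phi_mid s : eps <= s <= 1 - eps -> phi s = (s + 2) / 4.
Proof.
have E0 := e0; have E4 := e4.
move=> /andP[s0 s1]; rewrite /phi min_r // max_l // min_l // max_r //.
rewrite divff ?gt_eqF // subrr mul0r mulr0 addr0; by field.
Qed.

Lemma phi_high s : 1 - eps <= s <= 1 -> (3 - eps) / 4 <= phi s <= 1.
Proof.
have E0 := e0; have E4 := e4.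
move=> /andP[s0 s1]; rewrite /phi min_r; last lra.
rewrite max_l; last lra.
rewrite min_r; last lra.
rewrite max_l //.
rewrite divff ?gt_eqF //.
have /andP[q0 q1] := divI (s - (1 - eps)) (ltac:(apply/andP; split; lra)).
apply/andP; split; nra.
Qed.

Lemma phi0 : phi 0 = 0.
Proof.
have E0 := e0; have E4 := e4.
rewrite /phi min_l; last lra.
rewrite max_r; last lra.
rewrite min_l; last lra.
rewrite max_r; last lra.
by rewrite !subrr ?mul0r ?mulr0 ?addr0 ?add0r.
Qed.

Lemma phi1 : phi 1 = 1.
Proof.
have E0 := e0; have E4 := e4.
rewrite /phi min_r; last lra.
rewrite max_l; last lra.
rewrite min_r; last lra.
rewrite max_l; last lra.
rewrite divff ?gt_eqF // (_ : 1 - (1 - eps) = eps); last by ring.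
rewrite divff ?gt_eqF //; by field.
Qed.

Lemma phi_unit s : 0 <= s <= 1 -> 0 <= phi s <= 1.
Proof.
have E0 := e0; have E4 := e4.
move=> /andP[s0 s1].
have [h1|h1] := leP s eps.
  have /andP[] := phi_low s (ltac:(apply/andP; split => //)) => a b; apply/andP; split; lra.
have [h2|h2] := leP s (1 - eps).
  rewrite phi_mid; last (apply/andP; split; lra); apply/andP; split; lra.
have /andP[] := phi_high s (ltac:(apply/andP; split => //; lra)) => a b; apply/andP; split; lra.
Qed.
End phi.

Lemma open_fin {T : topologicalType} (P : nat -> set T) n :
  (forall i, (i < n)%N -> open (P i)) -> open [set x | forall i, (i < n)%N -> P i x].
Proof.
elim: n => [_|n IH H].
  have -> : [set x : T | forall i, (i < 0)%N -> P i x] = setT.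
    by apply/seteqP; split => // x _ i.
  exact: openT.
have -> : [set x | forall i, (i < n.+1)%N -> P i x] =
   [set x | forall i, (i < n)%N -> P i x] `&` P n.
  apply/seteqP; split => x /=.
    by move=> h; split; [move=> i lt; apply: h; rewrite ltnS ltnW|apply: h].
  move=> [h1 h2] i; rewrite ltnS leq_eqVlt => /orP[/eqP ->//|lt]; exact: h1.
apply: openI; last by apply: H.
by apply: IH => i lt; apply: H; rewrite ltnS ltnW.
Qed.

Lemma fin_min (R : realType) (Q : nat -> R -> Prop) n :
  (forall i, (i < n)%N -> exists2 e, 0 < e & forall e', 0 < e' -> e' <= e -> Q i e') ->
  exists2 e, 0 < e & forall e', 0 < e' -> e' <= e -> forall i, (i < n)%N -> Q i e'.
Proof.
elim: n => [_|n IH H]; first by exists 1 => //; rewrite ltr01.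
have [e1 e1p H1] := IH (fun i lt => H i (ltnW lt)).
have [e2 e2p H2] := H n (ltnSn n).
have [h|h] := leP e1 e2.
  exists e1 => // e' ep le i; rewrite ltnS leq_eqVlt => /orP[/eqP ->|lt].
    apply: H2 => //; exact: le_trans le h.
  exact: H1.
exists e2 => // e' ep le i; rewrite ltnS leq_eqVlt => /orP[/eqP ->|lt].
  exact: H2.
apply: H1 => //; apply: (le_trans le); exact: ltW.
Qed.

Lemma near_pt (R : realType) (X : topologicalType) (alpha : R -> X) (K : set R) (O : set X) c :
  is_path alpha -> K `<=` @unitI R -> compact K -> open O -> alpha @` K `<=` O -> @unitI R c ->
  exists2 e, 0 < e & e <= 1 /\ forall s, @unitI R s -> `|c - s| < e ->
     (K c -> O (alpha s)) /\ (~ K c -> ~ K s).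
Proof.
move=> pa KI cK oO aKO uc.
suff [e ep He] : exists2 e, 0 < e & forall s, @unitI R s -> `|c - s| < e ->
     (K c -> O (alpha s)) /\ (~ K c -> ~ K s).
  have [h|h] := leP e 1.
    by exists e => //; split.
  exists 1; first exact: ltr01.
  split => // s us cs; apply: He => //; exact: lt_trans cs h.
have [k|nk] := pselect (K c).
  have Oa : O (alpha c) by apply: aKO; exists c.
  have nO : nbhs (alpha c) O by apply: open_nbhs_nbhs; split.
  have /subspace_continuousP pc := pa.
  have := pc c uc O nO.
  rewrite /from_subspace nbhs_simpl /= /within => /nbhs_ballP [e ep He].
  exists e => // s us cs; split => // _; apply: He => //.
have cl : closed K by apply: compact_closed => //; exact: norm_hausdorff.
have nK : nbhs c (~` K) by apply: open_nbhs_nbhs; split => //; exact: closed_openC.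
move/nbhs_ballP: nK => [e ep He].
by exists e => // s us cs; split => // _; apply: He.
Qed.

Arguments near_pt {R X alpha K O c}.
Arguments pconcat_path {R X g e}.
Arguments phom_trans {R X f g k}.
Arguments phi_cont {R eps}.
Arguments phi0 {R eps}.
Arguments phi1 {R eps}.

Theorem lemma2p3 (R : realType) (X : topologicalType) :
  locally_path_connected R X -> semilocally_simply_connected R X ->
  forall M : set (set (R -> X)), COq_open M ->
  forall alpha : R -> X, is_path alpha -> M (phclass alpha) ->
  exists V1 V0 : set X,
    [/\ open V1, V1 (alpha 1), open V0, V0 (alpha 0) &
        Nbd alpha V1 V0 `<=` M].
Proof.
move=> _ _ M [MPi [Spath SCO]] alpha pa Ma.
have [n [KK [OO [HKO HS]]]] := SCO alpha (conj pa Ma).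
pose V (c : R) := [set x : X | forall i, (i < n)%N -> KK i c -> OO i x].
have oV c : open (V c).
  apply: open_fin => i lt; change (open [set x | KK i c -> OO i x]); have [k|nk] := pselect (KK i c).
    have [_ _ oO _] := HKO i lt.
    have -> : [set x | KK i c -> OO i x] = OO i.
      by apply/seteqP; split => x //= h; apply: h.
    exact: oO.
  have -> : [set x | KK i c -> OO i x] = setT.
    by apply/seteqP; split => x //= _.
  exact: openT.
have Vc c : V c (alpha c).
  by move=> i lt k; have [_ _ _ h] := HKO i lt; apply: h; exists c.
have u0 : @unitI R 0 by apply/inI; split => //; exact: ler01.
have u1 : @unitI R 1 by apply/inI; split => //; exact: ler01.
have [e ep He] : exists2 e : R, 0 < e & forall e', 0 < e' -> e' <= e -> forall i, (i < n)%N ->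
   [/\ (KK i 0 -> forall s, 0 <= s -> s <= e' -> OO i (alpha s)),
       (~ KK i 0 -> forall s, KK i s -> e' <= s),
       (KK i 1 -> forall s, 1 - e' <= s -> s <= 1 -> OO i (alpha s)) &
       (~ KK i 1 -> forall s, KK i s -> s <= 1 - e')].
  apply: fin_min => i lt.
  have [KI cK oO aKO] := HKO i lt.
  have [a ap [a1 Ha]] := near_pt pa KI cK oO aKO u0.
  have [b bp [b1 Hb]] := near_pt pa KI cK oO aKO u1.
  suff [m mp [ma mb]] : exists2 m : R, 0 < m & m <= a /\ m <= b.
    exists (m / 2); first by lra.
    move=> e' e'p e'm; split.
    - move=> k s s0 se; apply: (Ha s _ _).1 => //; first by apply/inI; lra.
      by rewrite sub0r normrN ger0_norm //; lra.
    - move=> nk s ks; have /inI [s0 s1] := KI s ks.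
      rewrite leNgt; apply/negP => h; apply: (Ha s (KI s ks) _).2 nk ks.
      by rewrite sub0r normrN ger0_norm //; lra.
    - move=> k s s0 se; apply: (Hb s _ _).1 => //; first by apply/inI; lra.
      by rewrite ger0_norm; lra.
    - move=> nk s ks; have /inI [s0 s1] := KI s ks.
      rewrite leNgt; apply/negP => h; apply: (Hb s (KI s ks) _).2 nk ks.
      by rewrite ger0_norm; lra.
  have [h|h] := leP a b; first by exists a.
  by exists b => //; split => //; exact: ltW.
have [eps eps0 [eps4 Heps]] : exists2 eps : R, 0 < eps & 4 * eps <= 1 /\ forall i, (i < n)%N ->
   [/\ (KK i 0 -> forall s, 0 <= s -> s <= eps -> OO i (alpha s)),
       (~ KK i 0 -> forall s, KK i s -> eps <= s),
       (KK i 1 -> forall s, 1 - eps <= s -> s <= 1 -> OO i (alpha s)) &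
       (~ KK i 1 -> forall s, KK i s -> s <= 1 - eps)].
  have [h|h] := leP (4 * e) 1.
    by exists e => //; split => //; apply: He.
  exists (4^-1); first by lra.
  split; first by lra.
  by apply: He; lra.
exists (V 1), (V 0); split => //.
move=> _ [d [[pd dV] d0] [t [[pt tV] t1] <-]].
set gam := pconcat (pconcat d alpha) t.
have pgam : is_path gam.
  apply: pconcat_path => //; first by apply: pconcat_path => //; rewrite d0.
  rewrite t1 /pconcat; have -> : (0:R) <= 2^-1 by lra.
  by rewrite mulr0.
pose h := gam \o phi R eps.
have ph : is_path h.
  apply: (@comp_within _ _ _ _ (@unitI R)); last exact: pgam.
    by apply: continuous_subspaceT; exact: phi_cont.
  move=> s /inI [s0 s1]; have /andP[a b] := @phi_unit R eps eps0 eps4 s (ltac:(apply/andP; split => //)).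
  by apply/inI.
have Sh : is_path h /\ M (phclass h).
  apply: HS => // i lt _ [s Ks <-].
  have [KI _ _ aKO] := HKO i lt.
  have [C1 C2 C3 C4] := Heps i lt.
  have /inI [s0 s1] := KI s Ks.
  rewrite /h /gam /=.
  have [hl|hl] := ltP s eps.
    have k0 : KK i 0 by apply: contrapT => nk; have := C2 nk s Ks; lra.
    have /andP[p0 p1] := @phi_low R eps eps0 eps4 s (ltac:(apply/andP; split => //; lra)).
    rewrite /pconcat; case: ifP => q1.
      by apply: (tV (t (2 * phi R eps s))) => //; exists (2 * phi R eps s) => //; apply/inI; lra.
    move/negbT: q1; rewrite -ltNge => q1.
    have -> : 2 * phi R eps s - 1 <= 2^-1 by lra.
    by apply: C1 => //; lra.
  have [hh|hh] := leP s (1 - eps).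
    rewrite (@phi_mid R eps eps0 eps4 s (ltac:(apply/andP; split => //; lra))) /pconcat.
    have -> : ((s + 2) / 4 <= 2^-1) = false by apply/negbTE; rewrite -ltNge; lra.
    have -> : 2 * ((s + 2) / 4) - 1 <= 2^-1 by lra.
    have -> : 2 * (2 * ((s + 2) / 4) - 1) = s by field.
    by apply: aKO; exists s.
  have k1 : KK i 1 by apply: contrapT => nk; have := C4 nk s Ks; lra.
  have /andP[p0 p1] := @phi_high R eps eps0 eps4 s (ltac:(apply/andP; split => //; lra)).
  rewrite /pconcat.
  have -> : (phi R eps s <= 2^-1) = false by apply/negbTE; rewrite -ltNge; lra.
  case: ifP => q1.
    by apply: C3 => //; lra.
  move/negbT: q1; rewrite -ltNge => q1.
  by apply: (dV (d (2 * (2 * phi R eps s - 1) - 1))) => //; exists (2 * (2 * phi R eps s - 1) - 1) => //; apply/inI; lra.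
have rp1 := @reparam_hom R X gam (fun s => s) (phi R eps) pgam (@cI R) (phi_cont eps0 eps4).
have rp2 := @reparam_hom R X gam (phi R eps) (fun s => s) pgam (phi_cont eps0 eps4) (@cI R).
have uI : forall s, @unitI R s -> @unitI R (phi R eps s).
  move=> s /inI [s0 s1]; have /andP[a b] := @phi_unit R eps eps0 eps4 s (ltac:(apply/andP; split => //)).
  by apply/inI.
have E : phclass h = phclass gam.
  rewrite /phclass; apply/seteqP; split => g [pg hg]; split => //.
    apply: (phom_trans _ hg).
    by apply: rp1 => //=; rewrite ?(phi0 eps0 eps4) ?(phi1 eps0 eps4).
  apply: (phom_trans _ hg).
  by apply: rp2 => //=; rewrite ?(phi0 eps0 eps4) ?(phi1 eps0 eps4).
rewrite -E; exact: Sh.2.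
Qed.
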